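(* Let $s,k,g,l$ be indices with $k\ge1$, $1\le l\le k-1$, $r_l\ge r_s$, $0\le g\le n-1$. (a) If there is a job $j<k$ with $r_s\le r_j<r_l$ and $C^{\mathrm{edf}}_{s,j}>r_l$, then $P_{s,k,g,l}=+\infty$. (b) $P_{s,k,g,l}=0$ if and only if $U_{s,k-1,g}\ge r_l$ and every job $j<k$ with $r_s\le r_j<r_l$ satisfies $C^{\mathrm{edf}}_{s,j}\le r_l$.
   Context: Time is discrete (slots $[t,t+1)$). There are $n$ jobs, job $j$ with integer processing time $p_j\ge1$, release time $r_j$, deadline $d_j$; jobs are indexed so that $d_1<\dots<d_n$, release times are pairwise distinct, and the instance is feasible. A (partial, preemptive) schedule assigns to each slot at most one job so that each job it schedules receives exactly $p_j$ slots in $[r_j,d_j)$, with the earliest-deadline property (whenever busy at slot $t$, run the released, not yet completed scheduled job of smallest deadline). $C_{\max}(S)$ is its completion time. For $s\in\{1,\dots,n\}$, $k\in\{0,\dots,n\}$, an $(s,k)$-schedule is a schedule $S$ with $C_{\max}(S)\le d_k$ scheduling exactly the jobs $j\le k$ with $r_s\le r_j<C_{\max}(S)$; the empty schedule counts, with $C_{\max}=r_s$. Gaps of an $(s,k)$-schedule: maximal idle intervals between its blocks (maximal busy intervals), plus the idle interval from $r_s$ to the first block if nonempty; for $t\ge C_{\max}(S)$, the gaps of $S$ with respect to $[r_s,t)$ are its gaps together with $[C_{\max}(S),t)$ if $C_{\max}(S)<t$. $U_{s,k,g}$ is the maximum completion time of an $(s,k)$-schedule with at most $g$ gaps. For $p\ge0$,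 an $(s,k,p)$-schedule is an $(s,k)$-schedule for the modified instance with $r_k$ replaced by $\max\{r_s,r_k\}$ and $p_k$ by $p$. $\mathrm{prevr}_{k'}(t)=\max\{r_j: j\le k',\ r_j<t\}$ ($-\infty$ if no such $j$). $P_{s,k,g,l}$ is the minimum integer $p\ge0$ for which there is an $(s,k,p)$-schedule $S$ with $\mathrm{prevr}_{k-1}(r_l)<C_{\max}(S)\le r_l$ having at most $g$ gaps with respect to $[r_s,r_l)$, and $+\infty$ if none exists. For $r_j\ge r_s$, $C^{\mathrm{edf}}_{s,j}$ is the minimum completion time of job $j$ over all $(s,j)$-schedules that schedule $j$. *)

(* Defs.v *)
From mathcomp Require Import all_boot.
From Stdlib Require Import ClassicalEpsilon.
Set Implicit Arguments. Unset Strict Implicit. Unset Printing Implicit Defensive.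

(* An instance: jobs 1..n, processing times p, release times r, deadlines d
   (functions nat -> nat; only values at 1..n matter). Times are nat slots:
   slot t is [t, t+1). A slot assignment sigma : nat -> nat with
   sigma t = 0 meaning "idle" and sigma t = j >= 1 meaning job j runs. *)

Definition slots (sigma : nat -> nat) (j a b : nat) : nat :=
  \sum_(a <= t < b) (sigma t == j).

(* A (partial, preemptive) schedule of the set of jobs J: every job in J
   gets exactly p j slots, all inside [r j, d j); only jobs of J run;
   earliest-deadline property: a busy slot t runs a job whose deadline is
   minimal among the released, not yet completed jobs of J. *)
Definition schedule (n : nat) (p r d : nat -> nat) (J : nat -> Prop)
    (sigma : nat -> nat) : Prop :=
  [/\ (forall j, J j -> 1 <= j <= n),
      (forall t, sigma t != 0 -> J (sigma t)),
      (forall t, sigma t != 0 -> r (sigma t) <= t < d (sigma t)),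
      (forall j, J j -> slots sigma j 0 (d j) = p j) &
      (forall t i, sigma t != 0 -> J i -> r i <= t -> slots sigma i 0 t < p i ->
         d (sigma t) <= d i)].

(* C is the completion time C_max of sigma (last busy slot + 1); for the
   empty schedule the convention C = c0 is used. *)
Definition is_cmax (sigma : nat -> nat) (c0 C : nat) : Prop :=
  ((exists t, sigma t != 0) ->
      [/\ 0 < C, sigma C.-1 != 0 & forall t, C <= t -> sigma t = 0]) /\
  ((forall t, sigma t = 0) -> C = c0).

Definition sk_sched (n : nat) (p r d : nat -> nat) (s k : nat)
    (sigma : nat -> nat) (C : nat) : Prop :=
  [/\ schedule n p r d (fun j => 1 <= j <= k /\ r s <= r j < C) sigma,
      is_cmax sigma (r s) C & C <= d k].

(* number of maximal idle intervals of sigma inside [a,b)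
   (each counted by its left endpoint) *)
Definition ngaps (sigma : nat -> nat) (a b : nat) : nat :=
  \sum_(a <= t < b) ((sigma t == 0) && ((t == a) || (sigma t.-1 != 0))).

Definition U (n : nat) (p r d : nat -> nat) (s k g : nat) : nat :=
  epsilon (inhabits 0%N) (fun u =>
    (exists sigma, sk_sched n p r d s k sigma u /\ ngaps sigma (r s) u <= g) /\
    (forall sigma C, sk_sched n p r d s k sigma C -> ngaps sigma (r s) C <= g ->
       C <= u)).

Definition pmod (p : nat -> nat) (k q : nat) : nat -> nat :=
  fun j => if j == k then q else p j.
Definition rmod (r : nat -> nat) (s k : nat) : nat -> nat :=
  fun j => if j == k then maxn (r s) (r k) else r j.

(* prevr_{k'}(t); None stands for -infinity *)
Definition prevr (r : nat -> nat) (k' t : nat) : option nat :=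
  if [exists j : 'I_k'.+1, (0 < j) && (r j < t)]
  then Some (\max_(j < k'.+1 | (0 < j) && (r j < t)) r j)
  else None.

Definition minf_lt (o : option nat) (C : nat) : Prop :=
  match o with None => True | Some x => x < C end.

Definition P_ok (n : nat) (p r d : nat -> nat) (s k g l q : nat) : Prop :=
  exists sigma C,
    [/\ sk_sched n (pmod p k q) (rmod r s k) d s k sigma C,
        minf_lt (prevr r k.-1 (r l)) C, C <= r l &
        ngaps sigma (r s) (r l) <= g].

(* P_{s,k,g,l}; None stands for +infinity *)
Definition P (n : nat) (p r d : nat -> nat) (s k g l : nat) : option nat :=
  epsilon (inhabits None) (fun o =>
    match o with
    | None => forall q, ~ P_ok n p r d s k g l q
    | Some q => P_ok n p r d s k g l q /\
                forall q', P_ok n p r d s k g l q' -> q <= q'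
    end).

Definition job_completes (sigma : nat -> nat) (j c : nat) : Prop :=
  [/\ 0 < c, sigma c.-1 = j & forall t, c <= t -> sigma t != j].

Definition Cedf_ok (n : nat) (p r d : nat -> nat) (s j c : nat) : Prop :=
  exists sigma C, [/\ sk_sched n p r d s j sigma C, r s <= r j < C &
                      job_completes sigma j c].

(* C^edf_{s,j}; None stands for +infinity (no such schedule) *)
Definition Cedf (n : nat) (p r d : nat -> nat) (s j : nat) : option nat :=
  epsilon (inhabits None) (fun o =>
    match o with
    | None => forall c, ~ Cedf_ok n p r d s j c
    | Some c => Cedf_ok n p r d s j c /\
                forall c', Cedf_ok n p r d s j c' -> c <= c'
    end).

Definition pinf_gt (o : option nat) (x : nat) : Prop :=
  match o with None => True | Some c => x < c end.
Definition pinf_le (o : option nat) (x : nat) : Prop :=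
  match o with None => False | Some c => c <= x end.

Definition feasible (n : nat) (p r d : nat -> nat) : Prop :=
  exists sigma, schedule n p r d (fun j => 1 <= j <= n) sigma.

(* Main.v *)
Require Import Defs.
From mathcomp Require Import all_boot.
From Stdlib Require Import ClassicalEpsilon Classical.
From mathcomp Require Import zify.
Set Implicit Arguments. Unset Strict Implicit. Unset Printing Implicit Defensive.

Section Slots.
Variable sigma : nat -> nat.

Lemma slots_split j a m b : a <= m -> m <= b ->
  slots sigma j a b = slots sigma j a m + slots sigma j m b.
Proof. by move=> H1 H2; rewrite /slots (big_cat_nat H1 H2). Qed.

Lemma slotsS j a b : a <= b -> slots sigma j a b.+1 = slots sigma j a b + (sigma b == j).
Proof. by move=> H; rewrite /slots big_nat_recr. Qed.

Lemma slots_mono j b c : b <= c -> slots sigma j 0 b <= slots sigma j 0 c.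
Proof. by move=> H; rewrite (slots_split j (leq0n b) H) leq_addr. Qed.

Lemma slots_none j a b : (forall u, a <= u < b -> sigma u != j) -> slots sigma j a b = 0.
Proof.
move=> H; rewrite /slots (eq_big_nat _ _ (F2 := fun _ => 0)).
  by rewrite sum_nat_const_nat muln0.
by move=> u Hu; rewrite (negbTE (H u Hu)).
Qed.

Lemma slots_pos j a b : 0 < slots sigma j a b -> exists u, a <= u < b /\ sigma u = j.
Proof.
move=> H; apply: NNPP => Hn; move: H; rewrite slots_none ?ltnn //.
move=> u Hu; apply/eqP => E; apply: Hn; by exists u.
Qed.

Lemma slots_le j a b : slots sigma j a b <= b - a.
Proof.
rewrite /slots; apply: leq_trans (_ : \sum_(a <= t < b) 1 <= _).
  by apply: leq_sum => i _; case: (_ == _).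
by rewrite sum_nat_const_nat muln1.
Qed.

End Slots.


Section Sched.
Variables (n : nat) (p r d : nat -> nat).
Hypothesis Hd : forall i j, 1 <= i -> i < j -> j <= n -> d i < d j.

Lemma d_le i j : 1 <= i -> i <= j -> j <= n -> d i <= d j.
Proof.
move=> H1 H2 H3; case: (ltngtP i j) H2 => // [Hij _|<- _ //].
by apply: ltnW; apply: Hd.
Qed.

Lemma sched_ext J J' s : (forall j, J j <-> J' j) ->
  schedule n p r d J s -> schedule n p r d J' s.
Proof.
move=> E [h1 h2 h3 h4 h5]; split.
- by move=> j /E; apply: h1.
- by move=> t /h2 /E.
- exact: h3.
- by move=> j /E; apply: h4.
- by move=> t i H /E Hi; apply: h5.
Qed.

Lemma sched_mod p' r' J s : (forall j, J j -> p' j = p j /\ r' j = r j) ->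
  schedule n p' r' d J s -> schedule n p r d J s.
Proof.
move=> E [h1 h2 h3 h4 h5]; split.
- exact: h1.
- exact: h2.
- by move=> t H; have [_ <-] := E _ (h2 t H); apply: h3.
- by move=> j Hj; have [<- _] := E _ Hj; apply: h4.
- by move=> t i H Hi; have [<- <-] := E _ Hi; apply: h5.
Qed.

Section S1.
Variables (J : nat -> Prop) (s : nat -> nat).
Hypothesis Hs : schedule n p r d J s.

Lemma sch_range j : J j -> 1 <= j <= n.
Proof. by case: Hs => h1 *; apply: h1. Qed.

Lemma sch_J u : s u != 0 -> J (s u).
Proof. by case: Hs => _ h2 *; apply: h2. Qed.

Lemma sch_win u : s u != 0 -> r (s u) <= u < d (s u).
Proof. by case: Hs => _ _ h3 *; apply: h3. Qed.

Lemma sch_win' u j : s u = j -> j != 0 -> r j <= u < d j.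
Proof. by move=> E H; rewrite -E; apply: sch_win; rewrite E. Qed.

Lemma sch_p j : J j -> slots s j 0 (d j) = p j.
Proof. by case: Hs => _ _ _ h4 *; apply: h4. Qed.

Lemma sch_edf t i : s t != 0 -> J i -> r i <= t -> slots s i 0 t < p i ->
  d (s t) <= d i.
Proof. by case: Hs => _ _ _ _ h5; apply: h5. Qed.

Lemma sch_j0 j : J j -> j != 0.
Proof. by move=> /sch_range; case: j. Qed.

Lemma slots_le_p j b : J j -> slots s j 0 b <= p j.
Proof.
move=> Hj; case: (leqP b (d j)) => Hb.
  by rewrite -(sch_p Hj); apply: slots_mono.
rewrite (slots_split s j (leq0n (d j)) (ltnW Hb)) (sch_p Hj) slots_none ?addn0 //.
move=> u /andP[Hu _]; apply/eqP => E.
by have := sch_win' E (sch_j0 Hj); rewrite ltnNge Hu andbF.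
Qed.

Lemma slots_full j b : J j -> (forall u, b <= u -> s u != j) -> slots s j 0 b = p j.
Proof.
move=> Hj H; case: (leqP b (d j)) => Hb.
  rewrite -(sch_p Hj) (slots_split s j (leq0n b) Hb) [slots s j b _]slots_none ?addn0 //.
  by move=> u /andP[Hu _]; apply: H.
rewrite (slots_split s j (leq0n (d j)) (ltnW Hb)) (sch_p Hj) slots_none ?addn0 //.
move=> u /andP[Hu _]; apply/eqP => E.
by have := sch_win' E (sch_j0 Hj); rewrite ltnNge Hu andbF.
Qed.

Lemma slots_lt_run j a u : J j -> s u = j -> a <= u -> slots s j 0 a < p j.
Proof.
move=> Hj E Ha; have H1 : slots s j 0 u.+1 <= p j by apply: slots_le_p.
apply: leq_trans H1.
rewrite (slotsS _ _ (leq0n u)) E eqxx addn1 ltnS; exact: slots_mono.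
Qed.

Lemma no_more j a : J j -> p j <= slots s j 0 a -> forall u, a <= u -> s u != j.
Proof.
move=> Hj H u Hu; apply/eqP => E.
by have := slots_lt_run Hj E Hu; rewrite ltnNge H.
Qed.

Lemma job_runs j : J j -> 0 < p j -> exists u, s u = j /\ r j <= u < d j.
Proof.
move=> Hj Hpj; rewrite -(sch_p Hj) in Hpj.
have [u [_ Eu]] := slots_pos Hpj; exists u; split => //.
exact: sch_win' Eu (sch_j0 Hj).
Qed.

End S1.

Definition restr (s : nat -> nat) (jb : pred nat) : nat -> nat :=
  fun u => if jb (s u) then s u else 0.

Lemma restr_eq s (jb : pred nat) j u : jb j -> j != 0 -> (restr s jb u == j) = (s u == j).
Proof.
move=> Hj Hj0; rewrite /restr; case: ifP => // Hn.
rewrite eq_sym (negbTE Hj0); apply/esym/eqP => E; by rewrite E Hj in Hn.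
Qed.

Lemma restr_slots s (jb : pred nat) j a b : jb j -> j != 0 ->
  slots (restr s jb) j a b = slots s j a b.
Proof. by move=> H1 H2; apply: eq_bigr => u _; rewrite restr_eq. Qed.

Lemma sched_restr J s (jb : pred nat) : (forall j, jb j -> J j) ->
  schedule n p r d J s -> schedule n p r d (fun j => jb j) (restr s jb).
Proof.
move=> HJ Hs; have j0 : forall j, jb j -> j != 0.
  by move=> j /HJ; apply: (sch_j0 Hs).
split.
- by move=> j /HJ; apply: (sch_range Hs).
- by move=> t; rewrite /restr; case: ifP => // ->.
- by move=> t; rewrite /restr; case: ifP => // _; apply: (sch_win Hs).
- by move=> j Hj; rewrite restr_slots ?j0 //; apply: (sch_p Hs); apply: HJ.
- move=> t i; rewrite /restr; case: ifP => // _ H Hi; rewrite restr_slots ?j0 //.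
  by apply: (sch_edf Hs) => //; apply: HJ.
Qed.

End Sched.


Definition swp (s : nat -> nat) (t t' a : nat) : nat -> nat :=
  fun u => if u == t then a else if u == t' then 0 else s u.

Lemma swp_slots s t t' a c : s t = 0 -> s t' = a -> a != 0 -> t != t' ->
  slots (swp s t t' a) a 0 c + (t' < c) = slots s a 0 c + (t < c).
Proof.
move=> E1 E2 Ha Htt; elim: c => [|c IH]; first by rewrite /slots !big_geq.
rewrite !(slotsS _ _ (leq0n c)) !ltnS (leq_eqVlt t' c) (leq_eqVlt t c) (eq_sym t') (eq_sym t).
move: IH; set X := slots _ _ _ _; set Y := slots _ _ _ _ => IH.
have -> : (swp s t t' a c == a) = if c == t then true else if c == t' then false else (s c == a).
  by rewrite /swp; case: (c == t); rewrite ?eqxx //; case: (c == t'); rewrite // eq_sym (negbTE Ha).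
move: IH; case: (eqVneq c t) => [->|Hct] /=.
  rewrite E1 (eq_sym 0 a) (negbTE Ha) (negbTE Htt) ltnn /= addn0.
  by case: (t' < t) => /=; lia.
case: (eqVneq c t') => [->|Hct'] /=.
  rewrite E2 eqxx ltnn /=; lia.
lia.
Qed.

Lemma swp_other s t t' a j u : s t = 0 -> s t' = a -> j != a -> j != 0 ->
  (swp s t t' a u == j) = (s u == j).
Proof.
move=> E1 E2 Hja Hj0; rewrite /swp; case: (eqVneq u t) => [->|_].
  by rewrite E1 (eq_sym a j) (negbTE Hja) (eq_sym 0 j) (negbTE Hj0).
case: (eqVneq u t') => [->|_] //.
by rewrite E2 (eq_sym 0 j) (negbTE Hj0) (eq_sym a j) (negbTE Hja).
Qed.

Section Exch.
Variables (n : nat) (p r d : nat -> nat).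
Hypothesis Hd : forall i j, 1 <= i -> i < j -> j <= n -> d i < d j.
Variable jb : pred nat.

Definition pend (s : nat -> nat) t i := [&& jb i, r i <= t & slots s i 0 t < p i].

Lemma exch s t : schedule n p r d (fun j => jb j) s -> s t = 0 ->
  (exists i, pend s t i) ->
  exists s', [/\ schedule n p r d (fun j => jb j) s',
                 forall u, u < t -> s' u = s u & s' t != 0].
Proof.
move=> Hs Et exP.
case: (ex_minnP exP) => a /and3P[Ja Ra Sa] amin.
have Ha0 : a != 0 := sch_j0 Hs Ja.
have Ht : t < d a.
  rewrite ltnNge; apply/negP => Hle.
  have := slots_mono s a Hle; rewrite (sch_p Hs Ja) => H.
  by rewrite ltnNge H in Sa.
have : 0 < slots s a t (d a).
  have := sch_p Hs Ja; rewrite (slots_split s a (leq0n t) (ltnW Ht)) => E.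
  lia.
case/slots_pos => t' [/andP[Htt' Ht'] Et'].
have Hne : t != t'.
  by apply/eqP => E; rewrite -E Et in Et'; rewrite -Et' eqxx in Ha0.
have Hlt : t < t' by rewrite ltn_neqAle Hne Htt'.
have Sw c := swp_slots c Et Et' Ha0 Hne.
have Hle : forall i u, i != 0 -> slots s i 0 u <= slots (swp s t t' a) i 0 u.
  move=> i u Hi0; case: (eqVneq i a) => [->|Hia].
    have := Sw u; case: (ltnP t' u) => H1; case: (ltnP t u) => H2 /=; lia.
  by rewrite /slots; apply: eq_leq; apply: eq_bigr => v _; rewrite swp_other.
exists (swp s t t' a); split; last first.
- by rewrite /swp eqxx.
- by move=> u Hu; rewrite /swp (ltn_eqF Hu) (ltn_eqF (ltn_trans Hu Hlt)).
split.
- by move=> j /(sch_range Hs).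
- move=> u; rewrite /swp; case: (u == t) => [_|]; first exact: Ja.
  case: (u == t') => [/eqP //|H]; exact: (sch_J Hs H).
- move=> u; rewrite /swp; case: (eqVneq u t) => [->|_] H.
    rewrite Ra /=; apply: ltn_trans Hlt _.
    by have := sch_win' Hs Et' Ha0 => /andP[].
  case: (u == t') H => [/eqP //|H]; exact: (sch_win Hs H).
- move=> j Jj; case: (eqVneq j a) => [->|Hja].
    have := Sw (d a); have := sch_win' Hs Et' Ha0 => /andP[_ ->]; rewrite Ht.
    rewrite (sch_p Hs Ja) => ?; lia.
  have Hj0 : j != 0 := sch_j0 Hs Jj.
  rewrite -(sch_p Hs Jj); apply: eq_bigr => v _; rewrite swp_other //.
- move=> u i Hu Ji Ri Si.
  have Si' : slots s i 0 u < p i := leq_ltn_trans (Hle i u (sch_j0 Hs Ji)) Si.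
  move: Hu; rewrite /swp; case: (eqVneq u t) => [Eu|_] Hu.
    subst u; apply: (d_le Hd) => //; first by have := sch_range Hs Ja => /andP[].
      by apply: amin; rewrite /pend Ji Ri Si'.
    by have := sch_range Hs Ji => /andP[].
  case: (eqVneq u t') Hu => [_ /eqP //|_ Hu].
  by apply: (sch_edf Hs).
Qed.

Lemma iter_fill s b t E : schedule n p r d (fun j => jb j) s -> b <= t -> t <= E ->
  (forall u, b <= u < t -> s u != 0) ->
  exists s' t', [/\ schedule n p r d (fun j => jb j) s',
     (forall u, u < b -> s' u = s u), t <= t' <= E,
     (forall u, b <= u < t' -> s' u != 0) &
     (t' = E \/ forall i, jb i -> r i <= t' -> p i <= slots s' i 0 t')].
Proof.
move=> Hs Hbt HtE Hb; move Hm: (E - t) => m.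
elim: m t s Hs Hbt HtE Hb Hm => [|m IH] t s Hs Hbt HtE Hb Hm.
  exists s, t; split => //; first by rewrite leqnn HtE.
  by left; apply/eqP; rewrite eqn_leq HtE /= -subn_eq0 Hm.
have HtE' : t < E by rewrite -subn_gt0 Hm.
have Hm' : E - t.+1 = m by rewrite subnS Hm.
case: (classic (exists i, pend s t i)) => [exP|nP]; last first.
  exists s, t; split => //; first by rewrite leqnn HtE.
  right => i Ji Ri; rewrite leqNgt; apply/negP => Si; apply: nP; exists i.
  by rewrite /pend Ji Ri Si.
case: (eqVneq (s t) 0) => [Et|Nt].
  have [s' [Hs' Eq Nt']] := exch Hs Et exP.
  have Hb' : forall u, b <= u < t.+1 -> s' u != 0.
    move=> u /andP[H1]; rewrite ltnS leq_eqVlt => /orP[/eqP ->//|H2].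
    by rewrite Eq //; apply: Hb; rewrite H1.
  have [s'' [t'' [H1 H2 H3 H4 H5]]] := IH t.+1 s' Hs' (leqW Hbt) HtE' Hb' Hm'.
  exists s'', t''; split => //.
  - by move=> u Hu; rewrite H2 // Eq //; apply: leq_trans Hu Hbt.
  - by move: H3 => /andP[H31 H32]; rewrite H32 andbT ltnW.
have Hb' : forall u, b <= u < t.+1 -> s u != 0.
  move=> u /andP[H1]; rewrite ltnS leq_eqVlt => /orP[/eqP ->//|H2].
  by apply: Hb; rewrite H1.
have [s'' [t'' [H1 H2 H3 H4 H5]]] := IH t.+1 s Hs (leqW Hbt) HtE' Hb' Hm'.
exists s'', t''; split => //.
by move: H3 => /andP[H31 H32]; rewrite H32 andbT ltnW.
Qed.
End Exch.


Lemma inner_sum (P : pred nat) N v :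
  \sum_(0 <= j < N | P j) (v == j) = (v < N) && P v.
Proof.
elim: N => [|N IH]; first by rewrite big_geq.
rewrite big_mkcond big_nat_recr //= -big_mkcond IH ltnS (leq_eqVlt v N).
case: (eqVneq v N) => [->|Hv] /=; first by rewrite ltnn /=; case: (P N).
by case: (P N); rewrite ?addn0 // eq_sym (negbTE Hv) addn0.
Qed.

Lemma sum_slots (P : pred nat) N s a b :
  \sum_(0 <= j < N | P j) slots s j a b = \sum_(a <= u < b) ((s u < N) && P (s u)).
Proof.
rewrite /slots exchange_big_nat; apply: eq_bigr => u _; exact: inner_sum.
Qed.

Lemma sum_bool_le a b (f : nat -> bool) : \sum_(a <= u < b) f u <= b - a.
Proof.
apply: leq_trans (_ : \sum_(a <= u < b) 1 <= _).
  by apply: leq_sum => i _; case: (f i).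
by rewrite sum_nat_const_nat muln1.
Qed.

Lemma sum_eq_le (P : pred nat) (f g : nat -> nat) N :
  (forall j, P j -> f j <= g j) ->
  \sum_(0 <= j < N | P j) f j = \sum_(0 <= j < N | P j) g j ->
  forall j, j < N -> P j -> f j = g j.
Proof.
move=> Hle; elim: N => [|N IH] // E j Hj Pj.
move: E; rewrite !(big_mkcond P) !big_nat_recr //= -!big_mkcond => E.
have Ha : \sum_(0 <= i < N | P i) f i <= \sum_(0 <= i < N | P i) g i.
  by apply: leq_sum.
have Hb : (if P N then f N else 0) <= (if P N then g N else 0).
  by case: ifP => // /Hle.
have E' : \sum_(0 <= i < N | P i) f i + (if P N then f N else 0) = \sum_(0 <= i < N | P i) g i + (if P N then g N else 0) by exact: E.
have E1 : \sum_(0 <= i < N | P i) f i = \sum_(0 <= i < N | P i) g i by lia.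
have E2 : (if P N then f N else 0) = (if P N then g N else 0) by lia.
move: Hj Pj; rewrite ltnS leq_eqVlt => /orP[/eqP ->|Hj] Pj.
  by move: E2; rewrite Pj.
exact: IH.
Qed.

Definition bc (s : nat -> nat) a b := \sum_(a <= u < b) (s u != 0).

Lemma bc_split s a m b : a <= m -> m <= b -> bc s a b = bc s a m + bc s m b.
Proof. by move=> H1 H2; rewrite /bc (big_cat_nat H1 H2). Qed.

Lemma bc_full s a b : (forall u, a <= u < b -> s u != 0) -> bc s a b = b - a.
Proof.
move=> H; rewrite /bc (eq_big_nat _ _ (F2 := fun _ => 1)).
  by rewrite sum_nat_const_nat muln1.
by move=> u /H ->.
Qed.

Lemma bc_ext s s' a b : (forall u, a <= u < b -> s u = s' u) -> bc s a b = bc s' a b.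
Proof. by move=> H; apply: eq_big_nat => u /H ->. Qed.

Lemma bc_none s a b : (forall u, a <= u < b -> s u = 0) -> bc s a b = 0.
Proof.
move=> H; rewrite /bc (eq_big_nat _ _ (F2 := fun _ => 0)).
  by rewrite sum_nat_const_nat muln0.
by move=> u /H ->.
Qed.

Section SumSched.
Variables (n : nat) (p r d : nat -> nat).

Lemma sum_slots_bc (jb : pred nat) s a b : schedule n p r d (fun j => jb j) s ->
  \sum_(0 <= j < n.+1 | jb j) slots s j a b = bc s a b.
Proof.
move=> Hs; rewrite sum_slots; apply: eq_bigr => u _.
case: (eqVneq (s u) 0) => [E|Hu].
  rewrite E /=; case J0: (jb 0) => //; by have := sch_range Hs J0.
have := sch_J Hs Hu => /= J1; rewrite J1 andbT ltnS.
by have := sch_range Hs J1 => /andP[_ ->].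
Qed.
End SumSched.


Lemma ex_min_nat (Q : nat -> Prop) : (exists c, Q c) ->
  exists c, Q c /\ forall c', Q c' -> c <= c'.
Proof.
case=> c Qc; elim: c {-2}c (leqnn c) Qc => [|N IH] c Hc Qc.
  exists c; split => // c' _; by move: Hc; rewrite leqn0 => /eqP ->.
case: (classic (exists c', Q c' /\ c' < c)) => [[c' [Qc' Hc']]|H].
  by apply: (IH c') => //; rewrite -ltnS; apply: leq_trans Hc' Hc.
exists c; split => // c' Qc'; rewrite leqNgt; apply/negP => Hlt; apply: H.
by exists c'.
Qed.

Lemma ex_max_nat (Q : nat -> Prop) B : (exists c, Q c) ->
  (forall c, Q c -> c <= B) -> exists c, Q c /\ forall c', Q c' -> c' <= c.
Proof.
case=> c Qc HB.
suff H : forall m c', Q c' -> B - c' <= m -> exists c, Q c /\ forall c', Q c' -> c' <= c.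
  exact: (H (B - c) c).
elim=> [|m IH] c' Qc' Hm.
  exists c'; split => // c'' Qc''; have := HB _ Qc''; have := HB _ Qc'; lia.
case: (classic (exists c'', Q c'' /\ c' < c'')) => [[c'' [Qc'' Hc'']]|H].
  apply: (IH c'') => //; have := HB _ Qc''; lia.
exists c'; split => // c'' Qc''; rewrite leqNgt; apply/negP => Hlt; apply: H.
by exists c''.
Qed.

Definition minspec (Q : nat -> Prop) (o : option nat) : Prop :=
  match o with None => forall c, ~ Q c | Some c => Q c /\ forall c', Q c' -> c <= c' end.

Lemma minspec_eps Q : minspec Q (epsilon (inhabits None) (minspec Q)).
Proof.
apply: epsilon_spec.
case: (classic (exists c, Q c)) => [H|H].
  have [c [Qc Hc]] := ex_min_nat H; by exists (Some c).
exists None => c Qc; apply: H; by exists c.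
Qed.

Lemma minspec_some Q c : Q c -> exists c0, epsilon (inhabits None) (minspec Q) = Some c0 /\ Q c0 /\ c0 <= c.
Proof.
move=> Qc; have := minspec_eps Q; case: (epsilon _ _) => [c0 [Q0 H0]|H].
  by exists c0; split => //; split => //; apply: H0.
by case: (H c).
Qed.

Lemma minspec_none Q : (forall c, ~ Q c) -> epsilon (inhabits None) (minspec Q) = None.
Proof.
move=> H; have := minspec_eps Q; case: (epsilon _ _) => // c0 [Q0 _].
by case: (H c0).
Qed.

Lemma minspec_is Q c : epsilon (inhabits None) (minspec Q) = Some c -> Q c.
Proof. by move=> E; have := minspec_eps Q; rewrite E => -[]. Qed.

Section Cmax.
Variable s : nat -> nat.

Lemma cmax_ex c0 B : (forall u, s u != 0 -> u < B) -> exists C, is_cmax s c0 C.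
Proof.
move=> HB; case: (classic (exists u, s u != 0)) => [exP|nP].
  have ub : forall u, (fun u => s u != 0) u -> u <= B.
    by move=> u /HB /ltnW.
  case: (ex_maxnP exP ub) => u Hu umax.
  exists u.+1; split.
    move=> _; split => // t Ht; apply/eqP; apply: contraTT Ht => Ht.
    by rewrite -ltnNge ltnS umax.
  by move=> H; have := H u; move/eqP: Hu.
exists c0; split => // H; case: nP; exact: H.
Qed.

Lemma cmax_idle c0 C : is_cmax s c0 C -> forall u, C <= u -> s u = 0.
Proof.
case=> H1 H2 u Hu; case: (classic (exists t, s t != 0)) => [ex|nex].
  by have [_ _ ->] := H1 ex.
by apply: NNPP => Hne; apply: nex; exists u; apply/eqP.
Qed.

Lemma cmax_lt c0 C u : is_cmax s c0 C -> s u != 0 -> u < C.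
Proof.
move=> H Hu; rewrite ltnNge; apply/negP => Hle.
by rewrite (cmax_idle H Hle) eqxx in Hu.
Qed.

Lemma cmax_last c0 C u : is_cmax s c0 C -> s u != 0 -> 0 < C /\ s C.-1 != 0.
Proof. by case=> H1 _ Hu; have [? ? _] := H1 (ex_intro _ u Hu). Qed.

Lemma cmax_empty c0 C : is_cmax s c0 C -> (forall u, s u = 0) -> C = c0.
Proof. by case=> _ H2 H; apply: H2. Qed.
End Cmax.

Lemma last_slot n p r d J s j : schedule n p r d J s -> J j -> 0 < p j ->
  exists c, job_completes s j c.
Proof.
move=> Hs Jj Hpj; have [u [Eu Wu]] := job_runs Hs Jj Hpj.
have exP : exists u, (fun u => s u == j) u by exists u; rewrite /= Eu.
have ub : forall u, (fun u => s u == j) u -> u <= d j.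
  by move=> v /eqP Ev; have := sch_win' Hs Ev (sch_j0 Hs Jj) => /andP[_ /ltnW].
case: (ex_maxnP exP ub) => v /eqP Hv vmax.
exists v.+1; split => // t Ht; apply/negP => /vmax; by rewrite leqNgt Ht.
Qed.


Section Main.
Variables (n : nat) (p r d : nat -> nat).
Hypothesis Hp : forall j, 1 <= j <= n -> 0 < p j.
Hypothesis Hd : forall i j, 1 <= i -> i < j -> j <= n -> d i < d j.
Hypothesis Hfeas : feasible n p r d.
Variables (s k g l : nat).
Hypothesis Hs : 1 <= s <= n.
Hypothesis Hk : 1 <= k <= n.
Hypothesis Hl : 1 <= l <= k - 1.
Hypothesis Hrl : r s <= r l.

Lemma rmod_s : rmod r s k s = r s.
Proof. by rewrite /rmod; case: eqP => // ->; rewrite maxnn. Qed.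

Lemma rmod_ne j : j != k -> rmod r s k j = r j.
Proof. by rewrite /rmod => /negbTE ->. Qed.

Lemma pmod_ne q j : j != k -> pmod p k q j = p j.
Proof. by rewrite /pmod => /negbTE ->. Qed.

Lemma rl_dl : r l < d l.
Proof.
case: Hfeas => tau Ht.
have Hl1 : 1 <= l <= n by move: Hl Hk; lia.
have [u [_ /andP[H1 H2]]] := job_runs Ht Hl1 (Hp Hl1).
exact: leq_ltn_trans H1 H2.
Qed.

Lemma dl_dK : d l <= d k.-1.
Proof. apply: (d_le Hd); move: Hl Hk; lia. Qed.

Lemma dK_dk : d k.-1 < d k.
Proof. apply: Hd; move: Hl Hk; lia. Qed.

Lemma prevr_lt C : minf_lt (prevr r k.-1 (r l)) C ->
  forall j, 1 <= j <= k.-1 -> r j < r l -> r j < C.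
Proof.
move=> H j Hj Hrj; have Hjk : j < k.-1.+1 by move: Hj; lia.
move: H; rewrite /prevr; case: ifP => [_|Hn] /=.
  apply: leq_ltn_trans.
  have := leq_bigmax_cond (P := fun i : 'I_k.-1.+1 => (0 < i) && (r i < r l)) (F := fun i : 'I_k.-1.+1 => r i) (Ordinal Hjk).
  apply; rewrite /=; move: Hj Hrj => /andP[-> _] ->; done.
move/negbT: Hn => /existsPn /(_ (Ordinal Hjk)) /=.
by move: Hj Hrj => /andP[-> _] ->.
Qed.

Lemma prevr_of C : (forall j, 1 <= j <= k.-1 -> r j < r l -> r j < C) ->
  minf_lt (prevr r k.-1 (r l)) C.
Proof.
move=> H; rewrite /prevr; case: ifP => // /existsP [j /andP[Hj0 Hj]] /=.
have HC : 0 < C.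
  have := H j; have := ltn_ord j; move: Hj0 Hj; lia.
rewrite -(prednK HC) ltnS; apply/bigmax_leqP => i /andP[Hi0 Hi].
have := H i; have := ltn_ord i; move: Hi0 Hi HC; lia.
Qed.


Lemma Uspec K : r s <= d K ->
  (exists sg, sk_sched n p r d s K sg (U n p r d s K g) /\ ngaps sg (r s) (U n p r d s K g) <= g) /\
  (forall sg C, sk_sched n p r d s K sg C -> ngaps sg (r s) C <= g -> C <= U n p r d s K g).
Proof.
move=> HsK; rewrite /U.
pose UP := (fun u => (exists sg, sk_sched n p r d s K sg u /\ ngaps sg (r s) u <= g) /\
    (forall sg C, sk_sched n p r d s K sg C -> ngaps sg (r s) C <= g -> C <= u)).
apply: (epsilon_spec (inhabits 0) UP).
pose Q c := exists sg, sk_sched n p r d s K sg c /\ ngaps sg (r s) c <= g.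
have Q0 : Q (r s).
  exists (fun _ => 0); split; last by rewrite /ngaps big_geq.
  split => //; last first.
    by split => // [[t]]; rewrite eqxx.
  split => //.
  - by move=> j [_ /andP[H1 H2]]; move: H1 H2; lia.
  - by move=> j [_ /andP[H1 H2]]; move: H1 H2; lia.
have QB : forall c, Q c -> c <= d K by move=> c [sg [[_ _ ->]]].
have [c [Qc Hc]] := ex_max_nat (ex_intro _ _ Q0) QB.
exists c; split => //.
by move=> sg C H1 H2; apply: Hc; exists sg.
Qed.

Lemma restrict_cedf q sg C :
  sk_sched n (pmod p k q) (rmod r s k) d s k sg C ->
  minf_lt (prevr r k.-1 (r l)) C -> C <= r l ->
  forall j, 1 <= j < k -> r s <= r j < r l ->
  exists c, Cedf_ok n p r d s j c /\ c <= r l.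
Proof.
move=> [Hsg Hcm HCk] Hpv HCl j /andP[Hj1 Hjk] /andP[Hsj Hjl].
have HjK : 1 <= j <= k.-1 by move: Hj1 Hjk; lia.
have HjC := prevr_lt Hpv HjK Hjl.
pose jb := fun i => [&& 1 <= i <= j, r s <= r i & r i < C].
have HJ : forall i, jb i -> (fun i => 1 <= i <= k /\ rmod r s k s <= rmod r s k i < C) i.
  move=> i /and3P[/andP[Hi1 Hij] H1 H2]; rewrite rmod_s rmod_ne; last by move: Hij Hjk; lia.
  by split; [move: Hi1 Hij Hjk; lia | rewrite H1 H2].
have Hs1 := sched_restr HJ Hsg.
have Hs2 : schedule n p r d (fun i => jb i) (restr sg jb).
  apply: sched_mod Hs1 => i /and3P[/andP[Hi1 Hij] _ _].
  by rewrite pmod_ne ?rmod_ne //; move: Hij Hjk; lia.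
have HB : forall u, restr sg jb u != 0 -> u < C.
  move=> u; rewrite /restr; case: ifP => // _ Hu; exact: (cmax_lt Hcm Hu).
have [C1 HC1] := cmax_ex (r s) HB.
have Jj : jb j by rewrite /jb leqnn Hj1 Hsj HjC.
have Hjn : 1 <= j <= n by move: Hj1 Hjk Hk; lia.
have [u [Eu Wu]] := job_runs Hs2 Jj (Hp Hjn).
have Hu0 : restr sg jb u != 0 by rewrite Eu; move: Hj1; lia.
have [HC10 HC1l] := cmax_last HC1 Hu0.
have HC1C : C1 <= C.
  by rewrite -(prednK HC10); apply: HB.
have Hrun : forall i, jb i -> r i < C1.
  move=> i Ji; have Hin := sch_range Hs2 Ji.
  have [v [Ev /andP[Wv _]]] := job_runs Hs2 Ji (Hp Hin).
  apply: leq_ltn_trans Wv _; apply: (cmax_lt HC1); rewrite Ev; by have := sch_j0 Hs2 Ji.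
have Hsk : sk_sched n p r d s j (restr sg jb) C1.
  split => //.
  - apply: sched_ext Hs2 => i; split.
      move=> Ji; move: (Ji) => /and3P[H1 H2 _]; by rewrite H1 H2 (Hrun i Ji).
    move=> [H1 /andP[H2 H3]]; rewrite /jb H1 H2 /=; exact: leq_trans H3 HC1C.
  - have Ja := sch_J Hs2 HC1l.
    have /andP[_ H2] := sch_win Hs2 HC1l.
    move: Ja => /= /and3P[/andP[Ha1 Haj] _ _].
    rewrite -(prednK HC10); apply: leq_trans H2 _; apply: (d_le Hd) => //; move: Hjn; lia.
have [c Hc] := last_slot Hs2 Jj (Hp Hjn).
exists c; split.
  exists (restr sg jb), C1; split => //; by rewrite Hsj (Hrun j Jj).
case: Hc => Hc0 Hc1 _.
have : restr sg jb c.-1 != 0 by rewrite Hc1; move: Hj1; lia.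
move/(cmax_lt HC1) => H; rewrite -(prednK Hc0); apply: leq_trans HCl; exact: leq_trans H HC1C.
Qed.

Lemma slots_eqf f f' j a b : (forall u, (f u == j) = (f' u == j)) ->
  slots f j a b = slots f' j a b.
Proof. by move=> H; apply: eq_bigr => u _; rewrite H. Qed.

Lemma Peq : P n p r d s k g l = epsilon (inhabits None) (minspec (P_ok n p r d s k g l)).
Proof. by []. Qed.

Lemma Cedfeq j : Cedf n p r d s j = epsilon (inhabits None) (minspec (Cedf_ok n p r d s j)).
Proof. by []. Qed.

Lemma partA : (exists j, [/\ 1 <= j < k, r s <= r j < r l & pinf_gt (Cedf n p r d s j) (r l)]) ->
  P n p r d s k g l = None.
Proof.
case=> j [Hj Hjs Hgt]; rewrite Peq; apply: minspec_none => q [sg [C [H1 H2 H3 H4]]].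
have [c [Hc Hcl]] := restrict_cedf H1 H2 H3 Hj Hjs.
have [c0 [E [_ Hc0]]] := minspec_some Hc.
by move: Hgt; rewrite Cedfeq E /=; lia.
Qed.

Lemma partB1 : P n p r d s k g l = Some 0 ->
  forall j, 1 <= j < k -> r s <= r j < r l -> pinf_le (Cedf n p r d s j) (r l).
Proof.
rewrite Peq => /minspec_is [sg [C [H1 H2 H3 H4]]] j Hj Hjs.
have [c [Hc Hcl]] := restrict_cedf H1 H2 H3 Hj Hjs.
have [c0 [E [_ Hc0]]] := minspec_some Hc.
by rewrite Cedfeq E /=; lia.
Qed.

Lemma partB2 : P n p r d s k g l = Some 0 -> r l <= U n p r d s k.-1 g.
Proof.
rewrite Peq => /minspec_is [sg [C [[Hsg Hcm HCk] Hpv HCl Hng]]].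
pose K := k.-1.
have HKn : K <= n by rewrite /K; move: Hk; lia.
have HlK : 1 <= l <= K by rewrite /K; move: Hl; lia.
have HsK : r s <= d K by have := rl_dl; have := dl_dK; rewrite -/K; lia.
have [_ Umax] := Uspec HsK.
have F1 : forall u, sg u != 0 -> [/\ 1 <= sg u <= K, sg u != k, r s <= r (sg u) & r (sg u) < C].
  move=> u Hu; have [/andP[H1 H2] /andP[H3 H4]] := sch_J Hsg Hu.
  have Hnk : sg u != k.
    apply/eqP => Ek; have := sch_p Hsg (sch_J Hsg Hu); rewrite Ek /pmod eqxx => E0.
    have Hw := sch_win Hsg Hu; rewrite Ek in Hw.
    have : 0 < slots sg k 0 (d k).
      apply: leq_trans (slots_mono sg k (_ : u.+1 <= d k)); last by move: Hw => /andP[].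
      by rewrite (slotsS _ _ (leq0n u)) Ek eqxx addn1.
    by rewrite E0.
  move: H3 H4; rewrite rmod_s rmod_ne // => H3 H4; split => //.
  by rewrite /K; move: H1 H2 Hnk; lia.
have F2 : forall u, C <= u -> sg u = 0 := cmax_idle Hcm.
case: Hfeas => tau0 Htau0.
pose yb := fun j => (1 <= j <= K) && (r l <= r j).
have Htau : schedule n p r d (fun j => yb j) (restr tau0 yb).
  apply: sched_restr Htau0 => j /andP[H1 _]; move: H1 HKn; lia.
have HlE : r l <= (d n).+1.
  have := rl_dl; have : d l <= d n by apply: (d_le Hd); move: HlK HKn; lia.
  lia.
have Hb0 : forall u, r l <= u < r l -> restr tau0 yb u != 0 by move=> u; lia.
have [ts [t [Hts Hts0 /andP[Ht1 Ht2] Hbusy Hend]]] :=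
  iter_fill Hd Htau (leqnn (r l)) HlE Hb0.
have HdK : forall a, 1 <= a <= K -> d a <= d K.
  by move=> a /andP[H1 H2]; apply: (d_le Hd).
have Ytau : forall u, ts u != 0 -> [/\ 1 <= ts u <= K, r l <= r (ts u) & r (ts u) <= u < d (ts u)].
  move=> u Hu; have /andP[H1 H2] := sch_J Hts Hu; split => //; have := sch_win Hts Hu; done.
have HtE : t < (d n).+1.
  rewrite ltn_neqAle Ht2 andbT; apply/eqP => Et.
  have Hdn : r l <= d n < t.
    rewrite Et ltnSn andbT; have := rl_dl.
    have : d l <= d n by apply: (d_le Hd); move: HlK HKn; lia.
    lia.
  have [/andP[Ha1 Ha2] _ /andP[_ Ha3]] := Ytau _ (Hbusy _ Hdn).
  have : d (ts (d n)) <= d n by apply: (d_le Hd) => //; move: Ha2 HKn; lia.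
  lia.
have Hnp : forall i, yb i -> r i <= t -> p i <= slots ts i 0 t.
  by case: Hend => // Et; move: HtE; rewrite Et ltnn.
have Hlt : r l < t.
  rewrite ltn_neqAle Ht1 andbT; apply/eqP => Et.
  have Yl : yb l by rewrite /yb HlK leqnn.
  have Hlt0 : r l <= t by rewrite Et.
  have := Hnp l Yl Hlt0; rewrite -Et slots_none.
    have Hln : 1 <= l <= n by move: HlK HKn; lia.
    by have := Hp Hln; lia.
  move=> u /andP[_ Hu]; apply/eqP => Eu.
  by have := sch_win' Hts Eu (sch_j0 Hts Yl); rewrite leqNgt Hu.
pose sg' := fun u => if u < r l then sg u else if u < t then ts u else 0.
have EQ1 : forall i, 1 <= i -> r i < r l -> forall u, (sg' u == i) = (sg u == i).
  move=> i Hi Hri u; rewrite /sg'; case: ifP => // Hu.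
  rewrite F2; last by move: Hu HCl; lia.
  have H0i : (0 == i) = false by move: Hi; lia.
  rewrite H0i; case: ifP => _; last by [].
  case: (eqVneq (ts u) 0) => [->|Htu]; first by [].
  apply/negbTE/eqP => Ei; have [_ H _] := Ytau _ Htu; move: H; rewrite Ei; lia.
have EQ2 : forall i, yb i -> r i < t -> forall u, (sg' u == i) = (ts u == i).
  move=> i Yi Hri u; have Hi0 : i != 0 := sch_j0 Hts Yi.
  move: (Yi) => /andP[_ Hil]; rewrite /sg'; case: ifP => Hu.
    have -> : (ts u == i) = false.
      apply/negbTE/eqP => Ei; have := sch_win' Hts Ei Hi0; move: Hu Hil; lia.
    case: (eqVneq (sg u) 0) => [->|Hsu]; first by rewrite eq_sym (negbTE Hi0).
    apply/negbTE/eqP => Ei; have [_ _ _ H] := F1 _ Hsu; move: H HCl Hil; rewrite Ei; lia.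
  case: ifP => // Hut; rewrite (eq_sym 0 i) (negbTE Hi0); apply/esym/negbTE.
  apply: (no_more Hts Yi (Hnp i Yi (ltnW Hri))); move: Hut; lia.
have HJsg : forall i, 1 <= i <= K -> r s <= r i -> r i < r l ->
    (fun j => 1 <= j <= k /\ rmod r s k s <= rmod r s k j < C) i.
  move=> i Hi Hsi Hil; rewrite rmod_s rmod_ne; last by move: Hi; rewrite /K; lia.
  split; first by move: Hi; rewrite /K; lia.
  by rewrite Hsi (prevr_lt Hpv Hi Hil).
have Hnk : forall i, 1 <= i <= K -> i != k by move=> i; rewrite /K; lia.
have Hsk : sk_sched n p r d s K sg' t.
  have Hb : r l <= t.-1 < t by move: Hlt; lia.
  have Hsgt : sg' t.-1 = ts t.-1.
    rewrite /sg' ifF; last by move: Hlt; lia.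
    by rewrite ifT //; move: Hlt; lia.
  split; last first.
  - have [Ha _ /andP[_ Ha3]] := Ytau _ (Hbusy _ Hb).
    rewrite -(ltn_predK Hlt); apply: leq_trans Ha3 (HdK _ Ha).
  - split.
      move=> _; split; first by move: Hlt; lia.
        by rewrite Hsgt; apply: Hbusy.
      move=> u Hu; rewrite /sg' ifF; last by move: Hu Hlt; lia.
      by rewrite ifF //; move: Hu Hlt; lia.
    move=> H; have := H t.-1; rewrite Hsgt => /eqP; by rewrite (negbTE (Hbusy _ Hb)).
  split.
  - by move=> j [H _]; move: H HKn; lia.
  - move=> u; rewrite /sg'; case: ifP => Hu Hne.
      have [H1 _ H3 H4] := F1 _ Hne; split => //; rewrite H3 /=; move: H4 HCl Hlt; lia.
    case: ifP Hne => Hut Hne; last by rewrite eqxx in Hne.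
    have [H1 H2 H3] := Ytau _ Hne; split => //; rewrite (leq_trans Hrl H2) /=; move: H3 Hut; lia.
  - move=> u; rewrite /sg'; case: ifP => Hu Hne.
      have [_ H2 _ _] := F1 _ Hne; have := sch_win Hsg Hne; rewrite rmod_ne //.
    case: ifP Hne => Hut Hne; last by rewrite eqxx in Hne.
    by have [_ _ H3] := Ytau _ Hne.
  - move=> j [Hj /andP[Hsj Hjt]]; case: (ltnP (r j) (r l)) => Hjl.
      have Hj1 : 1 <= j by move: Hj; lia.
      rewrite (slots_eqf _ _ (EQ1 j Hj1 Hjl)).
      by rewrite (sch_p Hsg (HJsg j Hj Hsj Hjl)) pmod_ne ?Hnk.
    have Yj : yb j by rewrite /yb Hj Hjl.
    rewrite (slots_eqf _ _ (EQ2 j Yj Hjt)).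
    by have := sch_p Hts Yj.
  - move=> u i Hu [Hi /andP[Hsi Hit]] Hiu Hsl; case: (ltnP (r i) (r l)) => Hil.
      have Hi1 : 1 <= i by move: Hi; lia.
      move: Hsl; rewrite (slots_eqf _ _ (EQ1 i Hi1 Hil)) => Hsl.
      have Ji := HJsg i Hi Hsi Hil.
      move: Hu; rewrite /sg'; case: ifP => Hul Hu.
        apply: (sch_edf Hsg Hu Ji); first by rewrite rmod_ne ?Hnk.
        by rewrite pmod_ne ?Hnk.
      have : slots sg i 0 u = pmod p k 0 i.
        apply: (slots_full Hsg Ji) => v Hv; rewrite F2; last by move: Hv Hul HCl; lia.
        by move: Hi1; lia.
      by rewrite pmod_ne ?Hnk // => E; move: Hsl; rewrite E ltnn.
    have Yi : yb i by rewrite /yb Hi Hil.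
    move: Hsl; rewrite (slots_eqf _ _ (EQ2 i Yi Hit)) => Hsl.
    move: Hu; rewrite /sg'; case: ifP => Hul; first by move: Hul Hil Hiu; lia.
    case: ifP => Hut Hu; last by rewrite eqxx in Hu.
    by have := sch_edf Hts Hu Yi; apply.
have Hng' : ngaps sg' (r s) t <= g.
  rewrite /ngaps (big_cat_nat Hrl (ltnW Hlt)) /=.
  rewrite [X in _ + X](eq_big_nat _ _ (F2 := fun _ => 0)); last first.
    move=> u Hu; have Hbu := Hbusy u Hu; move: Hu => /andP[H1 H2].
    have E : sg' u = ts u by rewrite /sg' ltnNge H1 /= H2.
    by rewrite E (negbTE Hbu).
  rewrite sum_nat_const_nat muln0 addn0.
  apply: leq_trans Hng; apply: eq_leq; apply: eq_big_nat => u /andP[H1 H2].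
  by rewrite /sg' H2 (leq_ltn_trans (leq_pred u) H2).
apply: leq_trans (ltnW Hlt) _; exact: Umax Hsk Hng'.
Qed.

Section Back.
Hypothesis HC : forall j, 1 <= j < k -> r s <= r j < r l -> pinf_le (Cedf n p r d s j) (r l).

Definition xb := fun j => [&& 1 <= j <= k.-1, r s <= r j & r j < r l].
Definition W t := \sum_(0 <= j < n.+1 | xb j && (t <= r j)) p j.

Lemma CL m t : r l - t <= m -> t <= r l -> W t + t <= r l.
Proof.
elim: m t => [|m IH] t Hm Htl.
  rewrite /W big1 //= => j /andP[/and3P[_ _ H1] H2]; move: H1 H2 Hm; lia.
pose Z := fun j => xb j && (t <= r j).
case: (classic (exists j, Z j)) => [exZ|nZ]; last first.
  rewrite /W big1 // => j Zj; case: nZ; by exists j.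
have ub : forall j, Z j -> j <= n.
  by move=> j /andP[/and3P[/andP[_ H] _ _] _]; move: H Hk; lia.
case: (ex_maxnP exZ ub) => j Zj jmax.
move: (Zj) => /andP[/and3P[/andP[Hj1 HjK] Hsj Hjl] Htj].
have Hjk : 1 <= j < k by move: Hj1 HjK Hk; lia.
have := HC Hjk (introT andP (conj Hsj Hjl)); rewrite Cedfeq.
case E: (epsilon _ _) => [c|] //= Hcl.
have [T [CT [[HT HTc HTd] _ [Hc0 Hc1 Hc2]]]] := minspec_is E.
have Hj0 : j != 0 by move: Hj1; lia.
have HTc1 : T c.-1 != 0 by rewrite Hc1.
have Hct : t < c.
  have /andP[H1 _] := sch_win' HT Hc1 Hj0; move: H1 Htj Hc0; lia.
have HcCT : c <= CT by have := cmax_lt HTc HTc1; move: Hc0; lia.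
have Key : forall i, Z i -> r i < c -> p i = slots T i t c.
  move=> i Zi Hic; move: (Zi) => /andP[/and3P[/andP[Hi1 HiK] Hsi Hil] Hti].
  have Hij : i <= j := jmax i Zi.
  have Ji : (fun i => 1 <= i <= j /\ r s <= r i < CT) i.
    split; first by rewrite Hi1 Hij.
    by rewrite Hsi; apply: leq_trans Hic HcCT.
  have H1 : slots T i 0 c = p i.
    apply: (slots_full HT Ji) => u Hu; apply/eqP => Eu.
    case: (eqVneq i j) => [Eij|Nij].
      by move: (Hc2 u Hu); rewrite Eu Eij eqxx.
    have Hlt : i < j by rewrite ltn_neqAle Nij Hij.
    have Hric : r i <= c.-1 by move: Hic Hc0; lia.
    have Hcu : c.-1 <= u by move: Hu; lia.
    have Hjn : j <= n by move: HjK Hk; lia.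
    have H := sch_edf HT HTc1 Ji Hric (slots_lt_run HT Ji Eu Hcu).
    rewrite Hc1 in H; have := Hd Hi1 Hlt Hjn; lia.
  have H2 : slots T i 0 t = 0.
    apply: slots_none => u /andP[_ Hu]; apply/eqP => Eu.
    have Hi0 : i != 0 by move: Hi1; lia.
    have := sch_win' HT Eu Hi0; move: Hu Hti; lia.
  have := slots_split T i (leq0n t) (ltnW Hct); rewrite H1 H2 add0n; done.
have Ws : W t = \sum_(0 <= i < n.+1 | Z i && (r i < c)) p i + W c.
  rewrite /W (bigID (fun i => r i < c)) /=; congr (_ + _).
  apply: eq_bigl => i; rewrite /Z; case: (xb i) => //=; rewrite -leqNgt.
  apply/andP/idP => [[_ ->] //|H]; split => //; exact: leq_trans (ltnW Hct) H.
have S1 : \sum_(0 <= i < n.+1 | Z i && (r i < c)) p i <= c - t.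
  rewrite (eq_bigr (fun i => slots T i t c)); last by move=> i /andP[H1 H2]; apply: Key.
  rewrite sum_slots; exact: sum_bool_le.
have Hm' : r l - c <= m by move: Hm Hct; lia.
have := IH c Hm' Hcl.
rewrite Ws; move: S1 Hct; lia.
Qed.

Lemma partB3 : r l <= U n p r d s k.-1 g -> P n p r d s k g l = Some 0.
Proof.
move=> HU.
pose K := k.-1.
have HKn : K <= n by rewrite /K; move: Hk; lia.
have HlK : 1 <= l <= K by rewrite /K; move: Hl; lia.
have HsK : r s <= d K by have := rl_dl; have := dl_dK; rewrite -/K; lia.
have [[S [[HS HSc HSd] HSg]] _] := Uspec HsK.
move: HS HSc HSd HSg HU; rewrite -/K; set Uv := U n p r d s K g => HS HSc HSd HSg HU.
have HXJ : forall j, xb j -> (fun j => 1 <= j <= K /\ r s <= r j < Uv) j.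
  move=> j /and3P[H1 H2 H3]; split => //; rewrite H2 /=; exact: leq_trans H3 HU.
have HSX := sched_restr HXJ HS.
set SX := restr S xb in HSX.
have Hxn : forall j, xb j -> 1 <= j <= n by move=> j /and3P[H _ _]; move: H HKn; rewrite /K; lia.
pose w := \sum_(0 <= j < n.+1 | xb j) p j.
have Hw : w + r s <= r l.
  have -> : w = W (r s) by apply: eq_bigl => j; rewrite /xb; case: (r s <= r j); rewrite ?andbF ?andbT.
  by apply: (CL (m := r l - r s)).
have Hbc0 : bc SX 0 (r s) = 0.
  apply: bc_none => u /andP[_ Hu]; apply: NNPP => /eqP Hne.
  have /and3P[_ H1 _] := sch_J HSX Hne; have /andP[H2 _] := sch_win HSX Hne.
  move: H1 H2 Hu; lia.
have Hbcl : bc SX 0 (r l) <= w.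
  rewrite -(sum_slots_bc _ _ HSX); apply: leq_sum => j Xj; exact: (slots_le_p HSX).
have [f [Hf1 Hf2 Hf]] : exists f, [/\ r s <= f, f <= r l & bc SX 0 f + r l = w + f].
  suff H : forall m f, r l - f = m -> r s <= f <= r l -> w + f <= bc SX 0 f + r l ->
      exists f, [/\ r s <= f, f <= r l & bc SX 0 f + r l = w + f].
    by apply: (H _ (r s) erefl); [rewrite leqnn Hrl | rewrite Hbc0; lia].
  elim=> [|m IH] f' Hm /andP[Hf1 Hf2] Hle.
    exists f'; split => //; have Hf' : f' = r l by move: Hm Hf2; lia.
    by move: Hle Hbcl; rewrite Hf'; lia.
  case: (eqVneq (w + f') (bc SX 0 f' + r l)) => [E|Ne]; first by exists f'.
  have Hf'l : f' < r l by move: Hm; lia.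
  apply: (IH f'.+1); first by move: Hm; lia.
    by rewrite Hf'l andbT; apply: leq_trans Hf1 (leqnSn _).
  have : bc SX 0 f' <= bc SX 0 f'.+1 by rewrite (bc_split _ (leq0n f') (leqnSn f')) leq_addr.
  move: Hle Ne; lia.
have Hb0 : forall u, f <= u < f -> SX u != 0 by move=> u; lia.
have [sx [t [Hsx Hsx0 /andP[Ht1 Ht2] Hbusy Hend]]] := iter_fill Hd HSX (leqnn f) Hf2 Hb0.
have Hbct : forall t', f <= t' -> t' <= t -> bc sx 0 t' = bc SX 0 f + (t' - f).
  move=> t' H1 H2; rewrite (bc_split _ (leq0n f) H1) (bc_full (s := sx) (a := f) (b := t')).
    by rewrite (bc_ext (s := sx) (s' := SX) (a := 0) (b := f)) // => u /andP[_]; apply: Hsx0.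
  move=> u /andP[H3 H4]; apply: Hbusy; rewrite H3; exact: leq_trans H4 H2.
have Htl : t = r l.
  case: Hend => // Hnp; apply/eqP; rewrite eqn_leq Ht2 /= leqNgt; apply/negP => Htlt.
  have HA := sum_slots_bc 0 t Hsx.
  rewrite (Hbct t Ht1 (leqnn t)) in HA.
  have HB : \sum_(0 <= j < n.+1 | xb j && (r j <= t)) p j <=
            \sum_(0 <= j < n.+1 | xb j) slots sx j 0 t.
    rewrite [X in _ <= X](bigID (fun j => r j <= t)) /=.
    apply: leq_trans (leq_addr _ _); apply: leq_sum => j /andP[Xj Hj]; exact: Hnp.
  have HW : w = \sum_(0 <= j < n.+1 | xb j && (r j <= t)) p j + W t.+1.
    rewrite /w (bigID (fun j => r j <= t)) /=; congr (_ + _).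
    by apply: eq_bigl => j; rewrite ltnNge.
  have HCL : W t.+1 + t.+1 <= r l by apply: (CL (m := r l - t.+1)).
  move: HA HB HW HCL Hf Ht1; lia.
rewrite Htl in Hbusy Hbct Ht2.
have Hsum : \sum_(0 <= j < n.+1 | xb j) slots sx j 0 (r l) = w.
  rewrite (sum_slots_bc 0 (r l) Hsx) (Hbct (r l) Hf2 (leqnn _)); move: Hf Hf2; lia.
have Hfull : forall j, xb j -> slots sx j 0 (r l) = p j.
  move=> j Xj; apply: (sum_eq_le (P := xb) (f := fun j => slots sx j 0 (r l)) (g := p) (N := n.+1)).
  - by move=> i Xi; apply: (slots_le_p Hsx).
  - exact: Hsum.
  - by have := Hxn j Xj; lia.
  - exact: Xj.
have Hidle : forall u, r l <= u -> sx u = 0.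
  move=> u Hu; apply: NNPP => /eqP Hne; have Xa := sch_J Hsx Hne.
  by have := no_more Hsx Xa (eq_leq (esym (Hfull _ Xa))) Hu; rewrite eqxx.
have HB : forall u, sx u != 0 -> u < r l.
  move=> u Hu; rewrite ltnNge; apply/negP => H; by rewrite Hidle in Hu.
have [C HCm] := cmax_ex (rmod r s k s) HB.
have HXs : forall u, sx u != 0 -> [/\ 1 <= sx u <= K, r s <= r (sx u) & r (sx u) < r l].
  by move=> u Hu; have /and3P[H1 H2 H3] := sch_J Hsx Hu.
have HKk : forall j, 1 <= j <= K -> j != k by move=> j; rewrite /K; lia.
have HCrs : r s <= C.
  case: (classic (exists u, sx u != 0)) => [[u Hu]|nu].
    have [_ H2 _] := HXs u Hu; have /andP[H3 _] := sch_win Hsx Hu.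
    have := cmax_lt HCm Hu; move: H2 H3; lia.
  rewrite (cmax_empty HCm) ?rmod_s // => u; apply: NNPP => /eqP Hne; apply: nu; by exists u.
have HCl : C <= r l.
  case: (classic (exists u, sx u != 0)) => [[u Hu]|nu].
    have [H1 H2] := cmax_last HCm Hu; have := HB _ H2; move: H1; lia.
  rewrite (cmax_empty HCm) ?rmod_s //; last first.
    move=> u; apply: NNPP => /eqP Hne; apply: nu; by exists u.
have Hrun : forall j, xb j -> r j < C.
  move=> j Xj; have [u [Eu /andP[Hu _]]] := job_runs Hsx Xj (Hp (Hxn j Xj)).
  apply: leq_ltn_trans Hu _; apply: (cmax_lt HCm); rewrite Eu.
  by have := Hxn j Xj; lia.
have Hsk : sk_sched n (pmod p k 0) (rmod r s k) d s k sx C.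
  split => //; last first.
    have := rl_dl; have := dl_dK; have := dK_dk; move: HCl; lia.
  split.
  - by move=> j [H _]; move: H Hk; lia.
  - move=> u Hne; have [H1 H2 H3] := HXs u Hne.
    rewrite rmod_s rmod_ne ?HKk // H2 (Hrun _ (sch_J Hsx Hne)); split => //.
    by move: H1; rewrite /K; lia.
  - move=> u Hne; have [H1 _ _] := HXs u Hne; rewrite rmod_ne ?HKk //.
    by have := sch_win Hsx Hne.
  - move=> j [Hj /andP[H1 H2]]; case: (eqVneq j k) => [Ejk|Njk].
      rewrite Ejk /pmod eqxx; apply: slots_none => u _; apply/eqP => Eu.
      have Hne : sx u != 0 by rewrite Eu; move: Hk; lia.
      have [H3 _ _] := HXs u Hne; move: H3; rewrite Eu /K; lia.
    rewrite pmod_ne //; apply: (sch_p Hsx).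
    move: H1 H2; rewrite rmod_s rmod_ne // => H1 H2.
    rewrite /xb H1 /= (leq_trans H2 HCl) andbT; move: Hj Njk; rewrite /K; lia.
  - move=> u i Hu [Hi /andP[H1 H2]] Hri Hsl; case: (eqVneq i k) => [Eik|Nik].
      by move: Hsl; rewrite Eik /pmod eqxx.
    move: H1 H2 Hri Hsl; rewrite rmod_s rmod_ne // pmod_ne // => H1 H2 Hri Hsl.
    have Xi : xb i.
      rewrite /xb H1 /= (leq_trans H2 HCl) andbT; move: Hi Nik; rewrite /K; lia.
    exact: (sch_edf Hsx Hu Xi).
have Hpv : minf_lt (prevr r k.-1 (r l)) C.
  apply: prevr_of => j Hj Hjl; case: (leqP (r s) (r j)) => Hsj.
    apply: Hrun; by rewrite /xb Hj Hsj Hjl.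
  exact: leq_trans Hsj HCrs.
have HSX0 : forall u, u < r l -> (SX u == 0) = (S u == 0).
  move=> u Hu; rewrite /SX /restr; case: ifP => // Hx.
  rewrite eqxx; case: (eqVneq (S u) 0) => // Hne.
  have [/andP[H1 H2] /andP[H3 H4]] := sch_J HS Hne.
  have /andP[H5 _] := sch_win HS Hne.
  by move: Hx; rewrite /xb H1 H2 H3 /= (leq_ltn_trans H5 Hu).
have Hng : ngaps sx (r s) (r l) <= g.
  rewrite /ngaps (big_cat_nat Hf1 Hf2) /=.
  rewrite [X in _ + X](eq_big_nat _ _ (F2 := fun _ => 0)); last first.
    by move=> u Hu; rewrite (negbTE (Hbusy u Hu)).
  rewrite sum_nat_const_nat muln0 addn0.
  apply: leq_trans HSg; rewrite /ngaps (big_cat_nat Hf1 (leq_trans Hf2 HU)) /=.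
  apply: leq_trans (leq_addr _ _); apply: eq_leq; apply: eq_big_nat => u /andP[H1 H2].
  have Hu1 : u.-1 < f by apply: leq_ltn_trans (leq_pred u) H2.
  rewrite (Hsx0 u H2) (Hsx0 u.-1 Hu1) (HSX0 u); last exact: leq_trans H2 Hf2.
  by rewrite (HSX0 u.-1) //; apply: leq_trans Hu1 Hf2.
have HPok : P_ok n p r d s k g l 0 by exists sx, C; split.
rewrite Peq; have [c0 [E [_ Hc0]]] := minspec_some HPok.
by rewrite E; move: Hc0; rewrite leqn0 => /eqP ->.
Qed.

End Back.

Lemma main_sec :
  ((exists j, [/\ 1 <= j < k, r s <= r j < r l & pinf_gt (Cedf n p r d s j) (r l)]) ->
     P n p r d s k g l = None) /\
  (P n p r d s k g l = Some 0 <->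
     r l <= U n p r d s (k - 1) g /\
     (forall j, 1 <= j < k -> r s <= r j < r l -> pinf_le (Cedf n p r d s j) (r l))).
Proof.
split; first exact: partA.
rewrite subn1; split.
  by move=> H; split; [exact: partB2 H | exact: partB1 H].
by case=> H1 H2; exact: partB3 H2 H1.
Qed.

End Main.

Theorem lemma9 (n : nat) (p r d : nat -> nat)
  (Hp : forall j, 1 <= j <= n -> 0 < p j)
  (Hd : forall i j, 1 <= i -> i < j -> j <= n -> d i < d j)
  (Hr : forall i j, 1 <= i <= n -> 1 <= j <= n -> r i = r j -> i = j)
  (Hfeas : feasible n p r d)
  (s k g l : nat)
  (Hs : 1 <= s <= n) (Hk : 1 <= k <= n) (Hl : 1 <= l <= k - 1)
  (Hrl : r s <= r l) (Hg : g <= n - 1) :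
  ((exists j, [/\ 1 <= j < k, r s <= r j < r l & pinf_gt (Cedf n p r d s j) (r l)]) ->
     P n p r d s k g l = None) /\
  (P n p r d s k g l = Some 0 <->
     r l <= U n p r d s (k - 1) g /\
     (forall j, 1 <= j < k -> r s <= r j < r l -> pinf_le (Cedf n p r d s j) (r l))).
Proof. exact: (main_sec Hp Hd Hfeas g Hs Hk Hl Hrl). Qed.
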